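(* Let $q \geq 1$ and let $k$ be a positive integer with $k < n$. Let $\boldsymbol{B}$ be a dictionary as described in the context, and assume that every signal $\boldsymbol{y} \in \mathbb{R}^D$ that admits a $k$-block-sparse representation admits a unique one. If $$\sqrt{\frac{1+\sigma_q}{1+\epsilon_q}}\;\zeta_k + \zeta_{k-1} < \frac{1-\epsilon_q}{1+\epsilon_q},$$ then for every $\Lambda_k \subseteq \{1,\dots,n\}$ with $|\Lambda_k| = k$ and every $\boldsymbol{y} \in \bigoplus_{i\in\Lambda_k}\mathcal{S}_i$, every optimal solution $\boldsymbol{c}^*$ of $P_{\ell_q/\ell_1}(\boldsymbol{y})$ satisfies $\boldsymbol{c}^*[i] = \boldsymbol{0}$ for all $i \notin \Lambda_k$; i.e. the solution of $P_{\ell_q/\ell_1}$ is equivalent to that of $P_{\ell_q/\ell_0}$.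
   Context: $\boldsymbol{B} = [\boldsymbol{B}[1]\ \cdots\ \boldsymbol{B}[n]] \in \mathbb{R}^{D\times N}$ has unit-Euclidean-norm columns, blocks $\boldsymbol{B}[i] \in \mathbb{R}^{D\times m_i}$ (possibly with linearly dependent columns); $\mathcal{S}_i = \operatorname{span}(\boldsymbol{B}[i])$ has dimension $d_i$, and $\mathcal{S}_i\cap\mathcal{S}_j = \{0\}$ for $i\ne j$. Vectors $\boldsymbol{c}\in\mathbb{R}^N$ are written $(\boldsymbol{c}[1];\dots;\boldsymbol{c}[n])$, $\boldsymbol{c}[i]\in\mathbb{R}^{m_i}$. A $k$-block-sparse representation of $\boldsymbol{y}$ is $\boldsymbol{y}=\sum_{i\in\Lambda}\boldsymbol{s}_i$ with $|\Lambda|\le k$, $\boldsymbol{s}_i\in\mathcal{S}_i\setminus\{0\}$; uniqueness means any two have the same $\Lambda$ and the same $\boldsymbol{s}_i$. $P_{\ell_q/\ell_1}(\boldsymbol{y})$: $\min \sum_i \|\boldsymbol{c}[i]\|_q$ s.t. $\boldsymbol{y}=\boldsymbol{B}\boldsymbol{c}$; $P_{\ell_q/\ell_0}(\boldsymbol{y})$: minimize the number of nonzero blocks $\boldsymbol{c}[i]$ s.t. $\boldsymbol{y}=\boldsymbol{B}\boldsymbol{c}$. Subspace coherence: $\mu(\mathcal{S}_i,\mathcal{S}_j)=\max_{0\ne\boldsymbol{x}\in\mathcal{S}_i,\,0\ne\boldsymbol{z}\in\mathcal{S}_j}\frac{|\boldsymbol{x}^\top\boldsymbol{z}|}{\|\boldsymbol{x}\|_2\|\boldsymbol{z}\|_2}$.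 $k$-cumulative subspace coherence: $\zeta_k = \max_{\Lambda_k}\max_{i\notin\Lambda_k}\sum_{j\in\Lambda_k}\mu(\mathcal{S}_i,\mathcal{S}_j)$, the outer max over all $k$-element subsets $\Lambda_k\subseteq\{1,\dots,n\}$, with $\zeta_0 = 0$. Intra-block $q$-restricted isometry constant $\epsilon_q$: the smallest constant such that for every $i$ there is a full column-rank submatrix $\bar{\boldsymbol{B}}[i]\in\mathbb{R}^{D\times d_i}$ of $\boldsymbol{B}[i]$ with $(1-\epsilon_q)\|\bar{\boldsymbol{c}}\|_q^2 \le \|\bar{\boldsymbol{B}}[i]\bar{\boldsymbol{c}}\|_2^2 \le (1+\epsilon_q)\|\bar{\boldsymbol{c}}\|_q^2$ for all $\bar{\boldsymbol{c}}\in\mathbb{R}^{d_i}$. Upper intra-block $q$-restricted isometry constant $\sigma_q$: the smallest constant such that $\|\boldsymbol{B}[i]\boldsymbol{c}[i]\|_2^2\le(1+\sigma_q)\|\boldsymbol{c}[i]\|_q^2$ for all $i$ and all $\boldsymbol{c}[i]$. *)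

(* Defs.v *)
From HB Require Import structures.
From mathcomp Require Import all_boot all_order all_algebra.
From mathcomp Require Import classical_sets reals exp.
Set Implicit Arguments. Unset Strict Implicit. Unset Printing Implicit Defensive.
Import Order.TTheory GRing.Theory Num.Theory.
Local Open Scope ring_scope.

Section Defs.
Variable R : realType.

Definition norm2 p (x : 'cV[R]_p) : R := Num.sqrt (\sum_(j < p) (x j 0) ^+ 2).

Definition normq (q : R) p (x : 'cV[R]_p) : R :=
  powR (\sum_(j < p) powR `|x j 0| q) q^-1.

Variables (D n : nat) (m : 'I_n -> nat) (B : forall i : 'I_n, 'M[R]_(D, m i)).

Definition inS (i : 'I_n) (x : 'cV[R]_D) : Prop := exists c : 'cV[R]_(m i), x = B i *m c.

Definition mu (i j : 'I_n) : R :=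
  sup [set r : R | exists x z : 'cV[R]_D, [/\ inS i x, inS j z, x != 0, z != 0 &
        r = `|(x^T *m z) 0 0| / (norm2 x * norm2 z)]]%classic.

(* k-cumulative subspace coherence (values are >= 0, so max with 0 is harmless) *)
Definition zeta (k : nat) : R :=
  \big[Num.max/0]_(L : {set 'I_n} | #|L| == k)
     \big[Num.max/0]_(i in ~: L) \sum_(j in L) mu i j.

Definition intra_rip (q e : R) : Prop :=
  forall i : 'I_n, exists f : 'I_(\rank (B i)) -> 'I_(m i),
    \rank (colsub f (B i)) = \rank (B i) /\
    forall cb : 'cV[R]_(\rank (B i)),
      (1 - e) * normq q cb ^+ 2 <= norm2 (colsub f (B i) *m cb) ^+ 2 <=
      (1 + e) * normq q cb ^+ 2.

Definition eps_q (q : R) : R := inf [set e : R | 0 <= e /\ intra_rip q e]%classic.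

Definition upper_rip (q s : R) : Prop :=
  forall (i : 'I_n) (c : 'cV[R]_(m i)), norm2 (B i *m c) ^+ 2 <= (1 + s) * normq q c ^+ 2.

Definition sigma_q (q : R) : R := inf [set s : R | 0 <= s /\ upper_rip q s]%classic.

Definition block_sparse_rep (k : nat) (y : 'cV[R]_D) (L : {set 'I_n})
  (s : 'I_n -> 'cV[R]_D) : Prop :=
  [/\ (#|L| <= k)%N, (forall i, i \in L -> inS i (s i) /\ s i != 0) &
      y = \sum_(i in L) s i].

Definition unique_block_sparse (k : nat) : Prop :=
  forall y L s L' s', block_sparse_rep k y L s -> block_sparse_rep k y L' s' ->
    L = L' /\ (forall i, i \in L -> s i = s' i).

Definition feasible (y : 'cV[R]_D) (c : forall i : 'I_n, 'cV[R]_(m i)) : Prop :=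
  y = \sum_(i < n) B i *m c i.

Definition objective (q : R) (c : forall i : 'I_n, 'cV[R]_(m i)) : R :=
  \sum_(i < n) normq q (c i).

Definition optimal_lq_l1 (q : R) (y : 'cV[R]_D) (c : forall i : 'I_n, 'cV[R]_(m i)) : Prop :=
  feasible y c /\ forall c', feasible y c' -> objective q c <= objective q c'.

End Defs.

(* Main.v *)
Require Import Defs.
From HB Require Import structures.
From mathcomp Require Import all_boot all_order all_algebra.
From mathcomp Require Import classical_sets reals exp.
From mathcomp Require Import boolp convex hoelder interval_inference.
From mathcomp Require Import ring lra.
Import Order.TTheory GRing.Theory Num.Theory.
Import Defs.
Local Open Scope ring_scope.


Lemma powR_convex {R : realType} {p l x y : R} : 1 <= p -> 0 <= l -> l <= 1 -> 0 <= x -> 0 <= y ->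
  powR (l * x + (1 - l) * y) p <= l * powR x p + (1 - l) * powR y p.
Proof.
move=> p1 l0 l1 x0 y0.
have := @convex_powR R p p1 (Itv01 l0 l1) x y.
rewrite !inE /= !in_itv /= !andbT => /(_ x0 y0).
by rewrite !convRE /=.
Qed.

Lemma powRK (R : realType) (a q : R) : 0 <= a -> q != 0 -> powR (powR a q) q^-1 = a.
Proof. by move=> a0 q0; rewrite -powRrM mulfV // powRr1. Qed.

Lemma powRKV (R : realType) (a q : R) : 0 <= a -> q != 0 -> powR (powR a q^-1) q = a.
Proof. by move=> a0 q0; rewrite -powRrM mulVf // powRr1. Qed.

Definition Fq {R : realType} (q : R) {p} (x : 'cV[R]_p) : R := \sum_(j < p) powR `|x j 0| q.

Lemma Fq_ge0 (R : realType) (q : R) p (x : 'cV[R]_p) : 0 <= Fq q x.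
Proof. by apply: sumr_ge0 => j _; apply: powR_ge0. Qed.

Lemma normqE (R : realType) (q : R) p (x : 'cV[R]_p) : normq q x = powR (Fq q x) q^-1.
Proof. by []. Qed.

Lemma normq_ge0 (R : realType) (q : R) p (x : 'cV[R]_p) : 0 <= normq q x.
Proof. exact: powR_ge0. Qed.

Lemma Fq_normq {R : realType} {q : R} {p} (x : 'cV[R]_p) : q != 0 -> powR (normq q x) q = Fq q x.
Proof. by move=> q0; rewrite normqE powRKV // Fq_ge0. Qed.

Lemma normq_eq0 {R : realType} {q : R} {p} {x : 'cV[R]_p} : q != 0 -> normq q x = 0 -> x = 0.
Proof.
move=> q0 /powR_eq0_eq0 /eqP; rewrite psumr_eq0; last by move=> j _; apply: powR_ge0.
move=> /allP H; apply/matrixP => j k; rewrite (ord1 k) mxE.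
have /H : j \in index_enum 'I_p by rewrite mem_index_enum.
by move=> /implyP /(_ isT) /eqP /powR_eq0_eq0 /normr0_eq0.
Qed.

Lemma normq_entry (R : realType) (q : R) p (x : 'cV[R]_p) j : 0 < q -> `|x j 0| <= normq q x.
Proof.
move=> q0; rewrite -(@powRK _ `|x j 0| q) ?gt_eqF //.
rewrite normqE; apply: ge0_ler_powR; rewrite ?invr_ge0 ?(ltW q0) ?nnegrE ?powR_ge0 ?Fq_ge0 //.
rewrite /Fq (bigD1 j) //= lerDl; apply: sumr_ge0 => i _; apply: powR_ge0.
Qed.

Lemma normq_triangle (R : realType) (q : R) p (x y : 'cV[R]_p) : 1 <= q ->
  normq q (x + y) <= normq q x + normq q y.
Proof.
move=> q1; have q0 : 0 < q by apply: lt_le_trans q1.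
have qn0 : q != 0 by rewrite gt_eqF.
have [ax|ax] := eqVneq (normq q x) 0.
  by move: (ax); rewrite (normq_eq0 qn0 ax) add0r => ->; rewrite add0r.
have [ay|ay] := eqVneq (normq q y) 0.
  by move: (ay); rewrite (normq_eq0 qn0 ay) addr0 => ->; rewrite addr0.
move Ea: (normq q x) ax => a ax; move Eb: (normq q y) ay => b ay.
have a0 : 0 < a by rewrite lt_def ax -Ea normq_ge0.
have b0 : 0 < b by rewrite lt_def ay -Eb normq_ge0.
move ES: (a + b) => S; have S0 : 0 < S by rewrite -ES addr_gt0.
move El: (a / S) => l.
have l0 : 0 <= l by rewrite -El divr_ge0 // ltW.
have l1 : l <= 1.
  by rewrite -El ler_pdivrMr // mul1r -ES lerDl ltW.
have l1b : 1 - l = b / S.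
  rewrite -El -ES; field; rewrite gt_eqF //; exact: addr_gt0.
have key : forall j, powR (`|(x + y) j 0| / S) q <=
    l * powR (`|x j 0| / a) q + (1 - l) * powR (`|y j 0| / b) q.
  move=> j; eapply le_trans; last apply: (powR_convex q1 l0 l1); last first.
  - by rewrite divr_ge0 // ltW.
  - by rewrite divr_ge0 // ltW.
  apply: ge0_ler_powR; first exact: ltW.
  - by rewrite nnegrE divr_ge0 // ltW.
  - by rewrite nnegrE addr_ge0 // mulr_ge0 // ?subr_ge0 // divr_ge0 // ltW.
  have -> : l * (`|x j 0| / a) + (1 - l) * (`|y j 0| / b) = (`|x j 0| + `|y j 0|) / S.
    by rewrite l1b -El; field; rewrite !gt_eqF.
  by rewrite ler_pM2r ?invr_gt0 // mxE ler_normD.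
have powdiv : forall u v : R, 0 <= u -> 0 < v -> powR (u / v) q = powR u q / powR v q.
  move=> u v u0 v0; rewrite powRM ?invr_ge0 ?(ltW v0) //; congr (_ * _).
  by rewrite -powR_inv1 ?(ltW v0) // -powRrM mulrC powRrM powR_inv1 // powR_ge0.
have hF : Fq q (x + y) / powR S q <= 1.
  rewrite /Fq mulr_suml.
  under eq_bigr => j _ do rewrite -powdiv //.
  apply: le_trans (ler_sum _ (fun j _ => key j)) _.
  rewrite big_split /= -!mulr_sumr.
  under eq_bigr => j _ do rewrite powdiv //.
  rewrite -mulr_suml.
  under [X in _ + _ * X]eq_bigr => j _ do rewrite powdiv //.
  rewrite -mulr_suml.
  rewrite -/(Fq q x) -/(Fq q y) -(Fq_normq x qn0) -(Fq_normq y qn0) Ea Eb.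
  by rewrite !mulfV ?gt_eqF ?powR_gt0 // !mulr1 subrKC.
move: hF; rewrite ler_pdivrMr ?powR_gt0 // mul1r => HF.
rewrite normqE -(@powRK _ S q) ?(ltW S0) //.
by apply: ge0_ler_powR; rewrite ?nnegrE ?invr_ge0 ?(ltW q0) ?Fq_ge0 ?powR_ge0.
Qed.


Lemma dotE {R : realType} {p} (x z : 'cV[R]_p) : (x^T *m z) 0 0 = \sum_j x j 0 * z j 0.
Proof. by rewrite mxE; apply: eq_bigr => j _; rewrite mxE. Qed.

Lemma norm2_sqr {R : realType} {p} (x : 'cV[R]_p) : norm2 x ^+ 2 = \sum_j x j 0 ^+ 2.
Proof. by rewrite /norm2 sqr_sqrtr // sumr_ge0 // => j _; apply: sqr_ge0. Qed.

Lemma norm2_ge0 {R : realType} {p} (x : 'cV[R]_p) : 0 <= norm2 x.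
Proof. exact: sqrtr_ge0. Qed.

Lemma norm2_dot {R : realType} {p} (x : 'cV[R]_p) : norm2 x ^+ 2 = (x^T *m x) 0 0.
Proof. by rewrite norm2_sqr dotE; apply: eq_bigr => j _; rewrite expr2. Qed.

Lemma norm2_eq0 {R : realType} {p} (x : 'cV[R]_p) : norm2 x = 0 -> x = 0.
Proof.
move=> h; have : \sum_j x j 0 ^+ 2 == 0 by rewrite -norm2_sqr h expr0n.
rewrite psumr_eq0; last by move=> j _; apply: sqr_ge0.
move=> /allP H; apply/matrixP => j k; rewrite (ord1 k) mxE.
have /H : j \in index_enum 'I_p by rewrite mem_index_enum.
by move=> /implyP /(_ isT); rewrite sqrf_eq0 => /eqP.
Qed.

Lemma norm2_0 {R : realType} {p} : norm2 (0 : 'cV[R]_p) = 0.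
Proof.
rewrite /norm2 big1 ?sqrtr0 // => j _; by rewrite mxE expr0n.
Qed.

Lemma CS_sqr {R : realType} {p} (x z : 'cV[R]_p) :
  (\sum_j x j 0 * z j 0) ^+ 2 <= (\sum_j x j 0 ^+ 2) * (\sum_j z j 0 ^+ 2).
Proof.
set A := \sum_j x j 0 ^+ 2; set B := \sum_j z j 0 ^+ 2; set C := \sum_j x j 0 * z j 0.
have A0 : 0 <= A by apply: sumr_ge0 => j _; apply: sqr_ge0.
have B0 : 0 <= B by apply: sumr_ge0 => j _; apply: sqr_ge0.
have quad : forall t, 0 <= A + 2 * t * C + t ^+ 2 * B.
  move=> t; have -> : A + 2 * t * C + t ^+ 2 * B = \sum_j (x j 0 + t * z j 0) ^+ 2.
    rewrite /A /B /C !mulr_sumr -!big_split /=; apply: eq_bigr => j _; ring.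
  by apply: sumr_ge0 => j _; apply: sqr_ge0.
have [B00|Bn0] := eqVneq B 0.
  have -> : C = 0.
    have zz : forall j, z j 0 = 0.
      move=> j; move: B00 => /eqP; rewrite psumr_eq0; last by move=> i _; apply: sqr_ge0.
      move=> /allP /(_ j (mem_index_enum _)) /implyP /(_ isT).
      by rewrite sqrf_eq0 => /eqP.
    by rewrite /C big1 // => j _; rewrite zz mulr0.
  by rewrite expr0n /= mulr_ge0.
have Bp : 0 < B by rewrite lt_def Bn0 B0.
have := quad (- C / B).
have -> : A + 2 * (- C / B) * C + (- C / B) ^+ 2 * B = A - C ^+ 2 / B.
  by field.
rewrite subr_ge0 ler_pdivrMr //.
Qed.

Lemma CS {R : realType} {p} (x z : 'cV[R]_p) : `|(x^T *m z) 0 0| <= norm2 x * norm2 z.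
Proof.
rewrite dotE /norm2 -sqrtrM; last by apply: sumr_ge0 => j _; apply: sqr_ge0.
rewrite -sqrtr_sqr ler_sqrt; first exact: CS_sqr.
by apply: mulr_ge0; apply: sumr_ge0 => j _; apply: sqr_ge0.
Qed.


Lemma dotC {R : realType} {p} (x z : 'cV[R]_p) : (x^T *m z) 0 0 = (z^T *m x) 0 0.
Proof. by rewrite !dotE; apply: eq_bigr => j _; rewrite mulrC. Qed.

Lemma mu_sym {R : realType} {D n} {m : 'I_n -> nat} (B : forall i : 'I_n, 'M[R]_(D, m i)) i j :
  mu B i j = mu B j i.
Proof.
rewrite /mu; congr sup; apply/seteqP; split => r [x [z [H1 H2 H3 H4 Hr]]];
  by exists z, x; split => //; rewrite Hr dotC (mulrC (norm2 x)).

Qed.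

Lemma mu_set_ub {R : realType} {D n} {m : 'I_n -> nat} (B : forall i : 'I_n, 'M[R]_(D, m i)) i j :
  ubound [set r : R | exists x z : 'cV[R]_D, [/\ inS B i x, inS B j z, x != 0, z != 0 &
        r = `|(x^T *m z) 0 0| / (norm2 x * norm2 z)]]%classic 1.
Proof.
move=> r [x [z [_ _ x0 z0 Hr]]]; rewrite Hr.
have nx : 0 < norm2 x by rewrite lt_def norm2_ge0 andbT; apply/eqP => /norm2_eq0 /eqP; rewrite (negbTE x0).
have nz : 0 < norm2 z by rewrite lt_def norm2_ge0 andbT; apply/eqP => /norm2_eq0 /eqP; rewrite (negbTE z0).
by rewrite ler_pdivrMr ?mulr_gt0 // mul1r CS.
Qed.

Lemma mu_ge0 {R : realType} {D n} {m : 'I_n -> nat} (B : forall i : 'I_n, 'M[R]_(D, m i)) i j :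
  0 <= mu B i j.
Proof.
rewrite /mu; set S := (X in sup X).
have [hs|hs] := pselect (has_sup S); last by rewrite sup_out.
case: (hs) => [[r Sr] _].
apply: le_trans (sup_upper_bound hs Sr).
case: Sr => x [z [_ _ _ _ Hr]]; rewrite Hr.
by rewrite divr_ge0 // mulr_ge0 // norm2_ge0.
Qed.

Lemma mu_bound {R : realType} {D n} {m : 'I_n -> nat} (B : forall i : 'I_n, 'M[R]_(D, m i)) i j
  (x z : 'cV[R]_D) : inS B i x -> inS B j z ->
  `|(x^T *m z) 0 0| <= mu B i j * norm2 x * norm2 z.
Proof.
move=> hx hz.
have [->|x0] := eqVneq x 0.
  by rewrite norm2_0 mulr0 mul0r trmx0 mul0mx mxE normr0.
have [->|z0] := eqVneq z 0.
  by rewrite norm2_0 mulr0 mulmx0 mxE normr0.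
have nx : 0 < norm2 x by rewrite lt_def norm2_ge0 andbT; apply/eqP => /norm2_eq0 /eqP; rewrite (negbTE x0).
have nz : 0 < norm2 z by rewrite lt_def norm2_ge0 andbT; apply/eqP => /norm2_eq0 /eqP; rewrite (negbTE z0).
rewrite -mulrA -ler_pdivrMr ?mulr_gt0 //.
apply: sup_upper_bound; last by exists x, z.
split; first by exists (`|(x^T *m z) 0 0| / (norm2 x * norm2 z)), x, z.
by exists 1; apply: mu_set_ub.
Qed.


Lemma zeta_ge0 {R : realType} {D n} {m : 'I_n -> nat} (B : forall i : 'I_n, 'M[R]_(D, m i)) k :
  0 <= zeta B k.
Proof. exact: bigmax_ge_id. Qed.

Lemma zeta_bound {R : realType} {D n} {m : 'I_n -> nat} (B : forall i : 'I_n, 'M[R]_(D, m i)) k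
  (L : {set 'I_n}) j : #|L| = k -> j \notin L -> \sum_(i in L) mu B j i <= zeta B k.
Proof.
move=> hL hj; rewrite /zeta.
have h1 : \sum_(i in L) mu B j i <= \big[Num.max/0]_(i in ~: L) \sum_(j0 in L) mu B i j0.
  by apply: (le_bigmax_cond 0 (fun i => \sum_(j0 in L) mu B i j0)); rewrite inE.
apply: le_trans h1 _.
by apply: (le_bigmax_cond 0 (fun L0 : {set 'I_n} => \big[Num.max/0]_(i in ~: L0) \sum_(j0 in L0) mu B i j0)); rewrite hL.
Qed.

Definition Kb {R : realType} {D r} (N : 'M[R]_(D, r)) : R := \sum_d (\sum_a `|N d a|) ^+ 2.

Lemma normM_bound {R : realType} (q : R) {D r} (N : 'M[R]_(D, r)) (c : 'cV[R]_r) : 0 < q ->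
  norm2 (N *m c) ^+ 2 <= Kb N * normq q c ^+ 2.
Proof.
move=> q0; rewrite norm2_sqr /Kb mulr_suml; apply: ler_sum => d _.
rewrite -exprMn -[X in X <= _]real_normK ?num_real //.
apply: lerXn2r; rewrite ?nnegrE ?normr_ge0 ?mulr_ge0 ?normq_ge0 ?sumr_ge0 //.
rewrite mxE mulr_suml; apply: (le_trans (ler_norm_sum _ _ _)); apply: ler_sum => a _.
by rewrite normrM ler_wpM2l // normq_entry.
Qed.

Lemma Kb_ge0 {R : realType} {D r} (N : 'M[R]_(D, r)) : 0 <= Kb N.
Proof. by apply: sumr_ge0 => d _; apply: sqr_ge0. Qed.

Lemma upper_exists {R : realType} {D n} {m : 'I_n -> nat} (B : forall i : 'I_n, 'M[R]_(D, m i)) q :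
  0 < q -> exists s, 0 <= s /\ upper_rip B q s.
Proof.
move=> q0; exists (\sum_i Kb (B i)); split; first by apply: sumr_ge0 => i _; apply: Kb_ge0.
move=> i c; apply: (le_trans (normM_bound _ _ _ q0)).
rewrite ler_wpM2r ?sqr_ge0 // (bigD1 i) //=.
have : 0 <= \sum_(j | j != i) Kb (B j) by apply: sumr_ge0 => j _; apply: Kb_ge0.
lra.
Qed.

Definition Kb2 {R : realType} {D m} (M : 'M[R]_(D, m)) : R :=
  \sum_d (m%:R * \sum_k `|M d k|) ^+ 2.

Lemma Kb_colsub {R : realType} {D m r} (M : 'M[R]_(D, m)) (f : 'I_r -> 'I_m) :
  (r <= m)%N -> Kb (colsub f M) <= Kb2 M.
Proof.
move=> rm; rewrite /Kb /Kb2; apply: ler_sum => d _.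
have T0 : 0 <= \sum_k `|M d k| by apply: sumr_ge0 => *; exact: normr_ge0.
apply: lerXn2r.
- by rewrite nnegrE; apply: sumr_ge0 => *; exact: normr_ge0.
- by rewrite nnegrE mulr_ge0 ?ler0n.
apply: (@le_trans _ _ (\sum_(a < r) \sum_k `|M d k|)).
  apply: ler_sum => a _; rewrite mxE.
  rewrite (bigD1 (f a)) //= lerDl; apply: sumr_ge0 => *; exact: normr_ge0.
rewrite sumr_const card_ord -[X in X <= _]mulr_natl ler_wpM2r //.
by rewrite ler_nat.
Qed.

Lemma Kb2_ge0 {R : realType} {D m} (M : 'M[R]_(D, m)) : 0 <= Kb2 M.
Proof. by apply: sumr_ge0 => d _; apply: sqr_ge0. Qed.

Lemma colsub_rowsub {R : realType} {D m r} (M : 'M[R]_(D, m)) (f : 'I_r -> 'I_m) :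
  colsub f M = (rowsub f M^T)^T.
Proof. by apply/matrixP => i j; rewrite !mxE. Qed.

Lemma intra_exists {R : realType} {D n} {m : 'I_n -> nat} (B : forall i : 'I_n, 'M[R]_(D, m i)) q :
  0 < q -> exists e, 0 <= e /\ intra_rip B q e.
Proof.
move=> q0; exists (1 + \sum_i Kb2 (B i)); split.
  by rewrite addr_ge0 // sumr_ge0 // => i _; apply: Kb2_ge0.
move=> i; rewrite -(mxrank_tr (B i)).
exists (fun a => maxrankfun (B i)^T a); split.
  rewrite colsub_rowsub [LHS]mxrank_tr; apply/eqmx_rank/eqmxP; exact: (eq_maxrowsub (B i)^T).
move=> cb; apply/andP; split.
  apply: (@le_trans _ _ 0); last by apply: sqr_ge0.
  rewrite mulr_le0_ge0 ?sqr_ge0 // subr_le0 lerDl sumr_ge0 // => j _; apply: Kb2_ge0.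
apply: (le_trans (normM_bound _ _ _ q0)).
rewrite ler_wpM2r ?sqr_ge0 //.
apply: (@le_trans _ _ (Kb2 (B i))); first by apply: Kb_colsub; apply: rank_leq_row.
rewrite (bigD1 i) //=.
have : 0 <= \sum_(j | j != i) Kb2 (B j) by apply: sumr_ge0 => j _; apply: Kb2_ge0.
lra.
Qed.


Lemma intra_mono {R : realType} {D n} {m : 'I_n -> nat} (B : forall i : 'I_n, 'M[R]_(D, m i)) q e0 e :
  intra_rip B q e0 -> e0 <= e -> intra_rip B q e.
Proof.
move=> h le i; have [f [hr hb]] := h i; exists f; split => // cb.
have /andP [h1 h2] := hb cb; have N0 := sqr_ge0 (normq q cb); apply/andP; split.
  by apply: le_trans h1; rewrite ler_wpM2r // lerD2l lerN2.
by apply: le_trans h2 _; rewrite ler_wpM2r // lerD2l.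
Qed.

Lemma upper_mono {R : realType} {D n} {m : 'I_n -> nat} (B : forall i : 'I_n, 'M[R]_(D, m i)) q e0 e :
  upper_rip B q e0 -> e0 <= e -> upper_rip B q e.
Proof.
move=> h le i c; apply: le_trans (h i c) _.
by rewrite ler_wpM2r ?sqr_ge0 // lerD2l.
Qed.

Lemma eps_ge0 {R : realType} {D n} {m : 'I_n -> nat} (B : forall i : 'I_n, 'M[R]_(D, m i)) q :
  0 < q -> 0 <= eps_q B q.
Proof.
move=> q0; apply: lb_le_inf; first by have [e he] := intra_exists B _ q0; exists e.
by move=> e [].
Qed.

Lemma sigma_ge0 {R : realType} {D n} {m : 'I_n -> nat} (B : forall i : 'I_n, 'M[R]_(D, m i)) q :
  0 < q -> 0 <= sigma_q B q.
Proof.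
move=> q0; apply: lb_le_inf; first by have [e he] := upper_exists B _ q0; exists e.
by move=> e [].
Qed.

Lemma intra_above {R : realType} {D n} {m : 'I_n -> nat} (B : forall i : 'I_n, 'M[R]_(D, m i)) q e :
  0 < q -> eps_q B q < e -> intra_rip B q e.
Proof.
move=> q0 he; have ne : ([set e : R | 0 <= e /\ intra_rip B q e] !=set0)%classic.
  by have [e0 he0] := intra_exists B _ q0; exists e0.
have [e0 [_ h0] lt0] := inf_lt ne he.
by apply: intra_mono h0 (ltW lt0).
Qed.

Lemma upper_above {R : realType} {D n} {m : 'I_n -> nat} (B : forall i : 'I_n, 'M[R]_(D, m i)) q e :
  0 < q -> sigma_q B q < e -> upper_rip B q e.
Proof.
move=> q0 he; have ne : ([set e : R | 0 <= e /\ upper_rip B q e] !=set0)%classic.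
  by have [e0 he0] := upper_exists B _ q0; exists e0.
have [e0 [_ h0] lt0] := inf_lt ne he.
by apply: upper_mono h0 (ltW lt0).
Qed.

Lemma colsub_mul1 {R : realType} {D m r} (M : 'M[R]_(D, m)) (f : 'I_r -> 'I_m) :
  colsub f M = M *m colsub f 1%:M.
Proof. by rewrite mulmx_colsub mulmx1. Qed.

Lemma colsub_span {R : realType} {D m} (M : 'M[R]_(D, m)) (f : 'I_(\rank M) -> 'I_m) :
  \rank (colsub f M) = \rank M -> forall w : 'cV[R]_m, exists u, M *m w = colsub f M *m u.
Proof.
move=> hr w.
have sNM : ((colsub f M)^T <= M^T)%MS by rewrite colsub_mul1 trmx_mul submxMl.
have sMN : (M^T <= (colsub f M)^T)%MS.
  by rewrite -(mxrank_leqif_sup sNM).2 !mxrank_tr hr.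
have : (w^T *m M^T <= (colsub f M)^T)%MS := submx_trans (submxMl _ _) sMN.
case/submxP => X eX; exists X^T.
by apply: trmx_inj; rewrite trmx_mul eX trmx_mul trmxK.
Qed.

Lemma colsub_inj {R : realType} {D m} (M : 'M[R]_(D, m)) (f : 'I_(\rank M) -> 'I_m) :
  \rank (colsub f M) = \rank M -> injective f.
Proof.
move=> hr a b fab.
have rf : row_free (colsub f M)^T by rewrite /row_free mxrank_tr hr.
have /row_free_inj := rf.
move=> /(_ 1) /(_ (delta_mx 0 a) (delta_mx 0 b)).
rewrite -!rowE -!tr_col !col_colsub fab => /(_ erefl) /matrixP /(_ 0 a) /eqP.
by rewrite !mxE !eqxx/=; case: (a =P b); rewrite // oner_eq0.
Qed.


Lemma sum_inj_lift {R : realType} {m r} (f : 'I_r -> 'I_m) (g : R -> R) (u : 'I_r -> R) :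
  injective f -> g 0 = 0 ->
  \sum_(k < m) g (\sum_(a < r) (k == f a)%:R * u a) = \sum_(a < r) g (u a).
Proof.
move=> finj g0.
have pt : forall k, g (\sum_(a < r) (k == f a)%:R * u a) = \sum_(a < r) (k == f a)%:R * g (u a).
  move=> k; case: (pickP (fun a => f a == k)) => [a /eqP fak | none].
    have sel : forall h : 'I_r -> R, \sum_(b < r) (k == f b)%:R * h b = h a.
      move=> h; rewrite (bigD1 a) //= -fak eqxx mul1r.
      rewrite [X in _ + X]big1 ?addr0 // => b nb.
      case: eqP => [kfb|]; last by rewrite mul0r.
      by move: nb; rewrite -(finj b a) ?eqxx // -kfb.
    by rewrite !sel.
  rewrite !big1 //; first by move=> a _; case: eqP => [kfa|]; rewrite ?mul0r //;
     move: (none a); rewrite kfa eqxx.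
  by move=> a _; case: eqP => [kfa|]; rewrite ?mul0r //;
     move: (none a); rewrite kfa eqxx.
rewrite (eq_bigr _ (fun k _ => pt k)) exchange_big /=; apply: eq_bigr => a _.
rewrite (bigD1 (f a)) //= eqxx mul1r big1 ?addr0 // => k nk.
by rewrite (negbTE nk) mul0r.
Qed.

Lemma lift_vec {R : realType} (q : R) {D m r} (M : 'M[R]_(D, m)) (f : 'I_r -> 'I_m)
  (u : 'cV[R]_r) : injective f -> 0 < q ->
  exists v, M *m v = colsub f M *m u /\ normq q v = normq q u.
Proof.
move=> finj q0; exists (colsub f 1%:M *m u); split.
  by rewrite mulmxA -colsub_mul1.
rewrite !normqE; congr powR; rewrite /Fq.
transitivity (\sum_(k < m) powR `|\sum_(a < r) (k == f a)%:R * u a 0| q).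
  by apply: eq_bigr => k _; rewrite mxE; congr (powR `|_| q); apply: eq_bigr => a _; rewrite !mxE.
apply: (sum_inj_lift f (fun t => powR `|t| q) (fun a => u a 0) finj).
by rewrite normr0 powR0 // gt_eqF.
Qed.

Lemma rep_rip {R : realType} {D n} {m : 'I_n -> nat} (B : forall i : 'I_n, 'M[R]_(D, m i)) q e :
  0 < q -> intra_rip B q e -> forall i u, inS B i u ->
  exists v, B i *m v = u /\ (1 - e) * normq q v ^+ 2 <= norm2 u ^+ 2.
Proof.
move=> q0 hr i u [w ->].
have [f [hf hb]] := hr i.
have [ub hub] := colsub_span (B i) f hf w.
have [v [hv nv]] := lift_vec q (B i) f ub (colsub_inj (B i) f hf) q0.
exists v; split; first by rewrite hv hub.
by rewrite nv hub; have /andP [] := hb ub.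
Qed.


Lemma dot_sumr {R : realType} {D} {I : finType} (P : pred I) (x : 'cV[R]_D) (z : I -> 'cV[R]_D) :
  (x^T *m (\sum_(j | P j) z j)) 0 0 = \sum_(j | P j) (x^T *m z j) 0 0.
Proof. by rewrite mulmx_sumr summxE. Qed.

Lemma dotB {R : realType} {D} (x y z : 'cV[R]_D) :
  (x^T *m (y - z)) 0 0 = (x^T *m y) 0 0 - (x^T *m z) 0 0.
Proof. by rewrite !dotE -sumrB; apply: eq_bigr => j _; rewrite !mxE mulrBr. Qed.

Lemma exch_L {R : realType} {n} (F : 'I_n -> 'I_n -> R) (L : {set 'I_n}) :
  \sum_(i in L) \sum_(i' in L :\ i) F i i' = \sum_(i' in L) \sum_(i in L :\ i') F i i'.
Proof.
rewrite (exchange_big_dep (mem L)) /=; last by move=> i j _; rewrite finset.in_setD1 => /andP [].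
apply: eq_bigr => i' hi'; apply: eq_bigl => i.
by rewrite !finset.in_setD1 hi' andbT andbC eq_sym.
Qed.

Lemma coherence_sum {R : realType} {D n} {m : 'I_n -> nat} (B : forall i : 'I_n, 'M[R]_(D, m i))
  k (L : {set 'I_n}) (hL : #|L| = k) (u w : 'I_n -> 'cV[R]_D) :
  (forall i, i \in L -> inS B i (u i)) -> (forall j, j \notin L -> inS B j (w j)) ->
  \sum_(i in L) u i = \sum_(j in ~: L) w j ->
  (1 - zeta B k.-1) * \sum_(i in L) norm2 (u i) <= zeta B k * \sum_(j in ~: L) norm2 (w j).
Proof.
move=> hu hw hsum.
pose RHS i := \sum_(j in ~: L) mu B i j * norm2 (w j) + \sum_(i' in L :\ i) mu B i i' * norm2 (u i').
have RHS0 : forall i, 0 <= RHS i.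
  move=> i; apply: addr_ge0; apply: sumr_ge0 => j _; apply: mulr_ge0; 
    (apply: mu_ge0 || apply: norm2_ge0).
have per : forall i, i \in L -> norm2 (u i) <= RHS i.
  move=> i hi.
  have eu : u i = \sum_(j in ~: L) w j - \sum_(i' in L :\ i) u i'.
    by rewrite -hsum (big_setD1 i hi) /= addrK.
  have hsq : norm2 (u i) ^+ 2 <= norm2 (u i) * RHS i.
    rewrite norm2_dot {2}eu dotB dot_sumr dot_sumr.
    apply: (le_trans (ler_norm _)).
    rewrite /RHS mulrDr !mulr_sumr.
    apply: (le_trans (ler_normB _ _)).
    apply: lerD; apply: (le_trans (ler_norm_sum _ _ _)); apply: ler_sum => j hj.
      rewrite mulrCA mulrA; apply: mu_bound; first exact: hu.
      by apply: hw; move: hj; rewrite finset.in_setC.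
    rewrite mulrCA mulrA; apply: mu_bound; first exact: hu.
    by apply: hu; move: hj; rewrite finset.in_setD1 => /andP [].
  have [z0|nz] := eqVneq (norm2 (u i)) 0; first by rewrite z0.
  have pz : 0 < norm2 (u i) by rewrite lt_def nz norm2_ge0.
  by move: hsq; rewrite expr2 ler_pM2l.
have S1 : \sum_(i in L) norm2 (u i) <= \sum_(i in L) RHS i by apply: ler_sum.
have E1 : \sum_(i in L) \sum_(j in ~: L) mu B i j * norm2 (w j) <= zeta B k * \sum_(j in ~: L) norm2 (w j).
  rewrite exchange_big /= mulr_sumr; apply: ler_sum => j hj.
  rewrite -mulr_suml ler_wpM2r ?norm2_ge0 //.
  under eq_bigr => i _ do rewrite mu_sym.
  by apply: zeta_bound; move: hj; rewrite // finset.in_setC.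
have E2 : \sum_(i in L) \sum_(i' in L :\ i) mu B i i' * norm2 (u i') <= zeta B k.-1 * \sum_(i in L) norm2 (u i).
  rewrite exch_L mulr_sumr; apply: ler_sum => i' hi'.
  rewrite -mulr_suml ler_wpM2r ?norm2_ge0 //.
  under eq_bigr => i _ do rewrite mu_sym.
  apply: zeta_bound; last by rewrite !inE eqxx.
  by rewrite -hL (cardsD1 i' L) hi'.
move: S1; rewrite /RHS big_split /=.
lra.
Qed.


Lemma normq0 {R : realType} (q : R) {p} : q != 0 -> normq q (0 : 'cV[R]_p) = 0.
Proof.
move=> qn0; rewrite normqE /Fq big1 ?powR0 ?invr_eq0 //.
by move=> j _; rewrite mxE normr0 powR0.
Qed.

Lemma arith1 {R : realType} (E S Z0 Z1 a r : R) : 0 <= E -> 0 <= S -> 0 <= Z0 -> 0 <= Z1 ->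
  0 <= a -> a ^+ 2 * (1 + E) = 1 + S -> r * (1 + E) = 1 - E -> a * Z1 + Z0 < r ->
  Z0 < 1 /\ Z1 ^+ 2 * (1 + S) < (1 - E) * (1 - Z0) ^+ 2.
Proof.
move=> E0 S0 Z00 Z10 a0 ha hr hc.
have r1 : r <= 1 by nra.
have aZ : 0 <= a * Z1 by apply: mulr_ge0.
have Z0r : Z0 < r by lra.
split; first by lra.
have h1 : (a * Z1) ^+ 2 < (r - Z0) ^+ 2 by nra.
have h2 : (r - Z0) ^+ 2 <= r * (1 - Z0) ^+ 2.
  have hz : Z0 ^+ 2 <= r by nra.
  have : 0 <= (1 - r) * (r - Z0 ^+ 2) by apply: mulr_ge0; lra.
  have -> : r * (1 - Z0) ^+ 2 = (r - Z0) ^+ 2 + (1 - r) * (r - Z0 ^+ 2) by ring.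
  lra.
have -> : Z1 ^+ 2 * (1 + S) = (a * Z1) ^+ 2 * (1 + E) by rewrite -ha; ring.
have -> : (1 - E) * (1 - Z0) ^+ 2 = r * (1 - Z0) ^+ 2 * (1 + E) by rewrite -hr; ring.
nra.
Qed.

Lemma sqrt_le1 {R : realType} (c x b : R) : 0 <= x -> 0 <= b -> 0 <= c ->
  c * x ^+ 2 <= b ^+ 2 -> Num.sqrt c * x <= b.
Proof.
move=> x0 b0 c0 h.
rewrite -(ger0_norm x0) -sqrtr_sqr -sqrtrM // -(ger0_norm b0) -sqrtr_sqr.
by rewrite ler_sqrt // sqr_ge0.
Qed.

Lemma sqrt_le2 {R : realType} (c x b : R) : 0 <= x -> 0 <= b -> 0 <= c ->
  b ^+ 2 <= c * x ^+ 2 -> b <= Num.sqrt c * x.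
Proof.
move=> x0 b0 c0 h.
rewrite -(ger0_norm x0) -sqrtr_sqr -sqrtrM // -(ger0_norm b0) -sqrtr_sqr.
by rewrite ler_sqrt // mulr_ge0 // sqr_ge0.
Qed.

Lemma sum_split {R : realType} {n} (L : {set 'I_n}) (F : 'I_n -> R) :
  \sum_(i < n) F i = \sum_(i in L) F i + \sum_(i in ~: L) F i.
Proof.
rewrite (bigID (mem L)) /=; congr (_ + _); apply: eq_bigl => i.
by rewrite finset.in_setC.
Qed.

Lemma sum_splitM {R : realType} {D n} (L : {set 'I_n}) (F : 'I_n -> 'cV[R]_D) :
  \sum_(i < n) F i = \sum_(i in L) F i + \sum_(i in ~: L) F i.
Proof.
rewrite (bigID (mem L)) /=; congr (_ + _); apply: eq_bigl => i.
by rewrite finset.in_setC.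
Qed.

Lemma arith_CA {R : realType} (x y z w : R) : x + y <= z -> z <= x + w -> y <= w.
Proof. lra. Qed.

Lemma arith_final {R : realType} (W al ga Z1 A C Ub Vb : R) :
  0 < W -> 0 < al -> 0 <= ga -> 0 <= Z1 -> 0 < C -> C <= A ->
  (Z1 * ga) ^+ 2 < (al * W) ^+ 2 ->
  al * A <= Ub -> Vb <= ga * C -> W * Ub <= Z1 * Vb -> False.
Proof.
move=> W0 al0 ga0 Z10 C0 CA h1 hA hB hcoh.
have h2 : 0 < al * W by apply: mulr_gt0.
have h3 : 0 <= Z1 * ga by apply: mulr_ge0.
have lt1 : Z1 * ga < al * W by nra.
have s1 : W * (al * A) <= W * Ub by rewrite ler_pM2l.
have s2 : Z1 * Vb <= Z1 * (ga * C) by rewrite ler_wpM2l.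
have s3 : (Z1 * ga) * C < (al * W) * C by rewrite ltr_pM2r.
have s4 : (al * W) * C <= (al * W) * A by rewrite ler_pM2l.
have : W * (al * A) = (al * W) * A by ring.
have : Z1 * (ga * C) = (Z1 * ga) * C by ring.
lra.
Qed.

Lemma arith_CA2 {R : realType} (oc oc' X Y X' Z A : R) :
  oc <= oc' -> oc = X + Y -> oc' = X' + Z -> Z = 0 -> X' <= X + A -> Y <= A.
Proof. move=> h1 h2 h3 h4; rewrite h2 h3 h4 in h1; lra. Qed.


Theorem proposition3 (R : realType) (D n : nat) (m : 'I_n -> nat)
  (B : forall i : 'I_n, 'M[R]_(D, m i)) (q : R) (k : nat)
  (hq : 1 <= q) (hk0 : (0 < k)%N) (hkn : (k < n)%N)
  (hcol : forall (i : 'I_n) (j : 'I_(m i)), norm2 (col j (B i)) = 1)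
  (hinter : forall i j : 'I_n, i != j ->
     forall x : 'cV[R]_D, inS B i x -> inS B j x -> x = 0)
  (huniq : unique_block_sparse B k)
  (hcond : Num.sqrt ((1 + sigma_q B q) / (1 + eps_q B q)) * zeta B k + zeta B k.-1
           < (1 - eps_q B q) / (1 + eps_q B q))
  (L : {set 'I_n}) (hL : #|L| = k) (y : 'cV[R]_D)
  (hy : exists s : 'I_n -> 'cV[R]_D,
          (forall i, i \in L -> inS B i (s i)) /\ y = \sum_(i in L) s i)
  (c : forall i : 'I_n, 'cV[R]_(m i))
  (hopt : optimal_lq_l1 B q y c) :
  forall i : 'I_n, i \notin L -> c i = 0.
Proof.
move=> i0 hi0.
have q0 : 0 < q by apply: lt_le_trans hq.
have qn0 : q != 0 by rewrite gt_eqF.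
have [//|ci0] := eqVneq (c i0) 0.
exfalso.
case: hy => t [ht hyt].
case: hopt => hfeas hmin.
have E0 := eps_ge0 B _ q0; have S0 := sigma_ge0 B _ q0.
have Z00 := zeta_ge0 B k.-1; have Z10 := zeta_ge0 B k.
move: hcond E0 S0 Z00 Z10.
move: (eps_q B q) (sigma_q B q) (zeta B k) (zeta B k.-1)
  (@intra_above R D n m B q) (@upper_above R D n m B q) (@coherence_sum R D n m B k L hL).
move=> E S Z1 Z0 hIA hUA hCoh hcond E0 S0 Z00 Z10.
have [Z01 key] : Z0 < 1 /\ Z1 ^+ 2 * (1 + S) < (1 - E) * (1 - Z0) ^+ 2.
  apply: (arith1 _ _ _ _ _ _ E0 S0 Z00 Z10 (sqrtr_ge0 _) _ _ hcond).
  - by rewrite sqr_sqrtr ?divfK ?gt_eqF ?ltr_wpDr // divr_ge0 // addr_ge0.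
  - by rewrite divfK // gt_eqF // ltr_wpDr.
set W := 1 - Z0; have W0 : 0 < W by rewrite /W subr_gt0.
set G := (1 - E) * W ^+ 2 - Z1 ^+ 2 * (1 + S).
have G0 : 0 < G by rewrite /G subr_gt0.
set dl := G / (2 * (W ^+ 2 + Z1 ^+ 2 + 1)).
have den0 : 0 < 2 * (W ^+ 2 + Z1 ^+ 2 + 1).
  by apply: mulr_gt0 => //; apply: ltr_wpDl; rewrite ?addr_ge0 ?sqr_ge0.
have dl0 : 0 < dl by apply: divr_gt0.
have dlb : dl * (W ^+ 2 + Z1 ^+ 2) < G.
  have : dl * (2 * (W ^+ 2 + Z1 ^+ 2 + 1)) = G by rewrite /dl divfK // gt_eqF.
  have := sqr_ge0 W; have := sqr_ge0 Z1; nra.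
pose e := E + dl; pose s := S + dl.
have hrip := hIA e q0 (ltr_pwDr dl0 (lexx _)).
have hup := hUA s q0 (ltr_pwDr dl0 (lexx _)).
have key2 : Z1 ^+ 2 * (1 + s) < (1 - e) * W ^+ 2.
  rewrite /s /e; move: dlb; rewrite /G; nra.
have e1 : 0 < 1 - e.
  have := sqr_ge0 Z1; have : 0 < W ^+ 2 by apply: exprn_gt0.
  move: key2; have : 0 <= 1 + s by rewrite /s; lra.
  nra.
pose u i := t i - B i *m c i.
have hu : forall i, i \in L -> inS B i (u i).
  move=> i hi; have [w hw] := ht i hi; exists (w - c i).
  by rewrite /u hw mulmxBr.
have hv : forall i, exists v : 'cV[R]_(m i),
    i \in L -> B i *m v = u i /\ (1 - e) * normq q v ^+ 2 <= norm2 (u i) ^+ 2.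
  move=> i; have [hi|hi] := boolP (i \in L).
    by have [v hv] := rep_rip B q e q0 hrip i (u i) (hu i hi); exists v.
  by exists 0.
pose vf i := proj1_sig (cid (hv i)).
have hvf : forall i, i \in L -> B i *m vf i = u i /\ (1 - e) * normq q (vf i) ^+ 2 <= norm2 (u i) ^+ 2.
  by move=> i; rewrite /vf; case: (cid (hv i)).
pose c' i := if i \in L then c i + vf i else 0.
have hfeas' : feasible B y c'.
  rewrite /feasible (bigID (mem L)) /= [X in _ + X]big1 ?addr0; last first.
    by move=> i /negbTE hi; rewrite /c' hi mulmx0.
  rewrite hyt; apply: eq_bigr => i hi.
  by rewrite /c' hi mulmxDr (hvf i hi).1 /u addrC subrK.
have hle := hmin c' hfeas'.
have hc'L : forall i, i \in L -> c' i = c i + vf i by move=> i hi; rewrite /c' hi.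
have hc'N : forall i, i \notin L -> c' i = 0 by move=> i /negbTE hi; rewrite /c' hi.
clearbody c' vf.
have eqC : forall F : 'I_n -> R, \sum_(i | i \notin L) F i = \sum_(i in ~: L) F i.
  by move=> F; apply: eq_bigl => i; rewrite finset.in_setC.
have ob1 : objective q c = \sum_(i in L) normq q (c i) + \sum_(i in ~: L) normq q (c i) :=
  sum_split L (fun i => normq q (c i)).
have ob2 : objective q c' = \sum_(i in L) normq q (c' i) + \sum_(i in ~: L) normq q (c' i) :=
  sum_split L (fun i => normq q (c' i)).
have ob3 : \sum_(i in ~: L) normq q (c' i) = 0.
  by apply: big1 => i hi; rewrite hc'N ?normq0 // -finset.in_setC.
have ob4 : \sum_(i in L) normq q (c' i) <= \sum_(i in L) normq q (c i) + \sum_(i in L) normq q (vf i).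
  rewrite -big_split /=; apply: ler_sum => i hi.
  by rewrite hc'L // normq_triangle.
have CA := arith_CA2 _ _ _ _ _ _ _ hle ob1 ob2 ob3 ob4.
have Cpos : 0 < \sum_(i in ~: L) normq q (c i).
  rewrite (bigD1 i0) /=; last by rewrite finset.in_setC.
  apply: ltr_wpDr; first by apply: sumr_ge0 => i _; apply: normq_ge0.
  rewrite lt_def normq_ge0 andbT; apply/eqP => /(normq_eq0 qn0) h.
  by move: ci0; rewrite h eqxx.
pose w j := B j *m c j.
have hw : forall j, j \notin L -> inS B j (w j) by move=> j _; exists (c j).
have hsum : \sum_(i in L) u i = \sum_(j in ~: L) w j.
  rewrite /u sumrB -hyt; move: hfeas; rewrite /feasible (sum_splitM L (fun i => B i *m c i)) => ->.
  by rewrite addrC addKr.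
have hcoh := hCoh u w hu hw hsum.
have hA : Num.sqrt (1 - e) * \sum_(i in L) normq q (vf i) <= \sum_(i in L) norm2 (u i).
  rewrite mulr_sumr; apply: ler_sum => i hi.
  apply: sqrt_le1; rewrite ?normq_ge0 ?norm2_ge0 ?(ltW e1) //.
  exact: (hvf i hi).2.
have hB : \sum_(j in ~: L) norm2 (w j) <= Num.sqrt (1 + s) * \sum_(i in ~: L) normq q (c i).
  rewrite mulr_sumr; apply: ler_sum => j hj.
  apply: sqrt_le2; rewrite ?normq_ge0 ?norm2_ge0 //; last exact: hup.
  by rewrite /s !addr_ge0 // ltW.
have al0 : 0 < Num.sqrt (1 - e) by rewrite sqrtr_gt0.
have ga0 : 0 <= Num.sqrt (1 + s) by apply: sqrtr_ge0.
have h1 : (Z1 * Num.sqrt (1 + s)) ^+ 2 < (Num.sqrt (1 - e) * W) ^+ 2.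
  rewrite !exprMn !sqr_sqrtr ?(ltW e1) //; last by rewrite /s !addr_ge0 // ltW.
exact: (arith_final _ _ _ _ _ _ _ _ W0 al0 ga0 Z10 Cpos CA h1 hA hB hcoh).
Qed.
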